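(* Let $\mathcal M'=\bigcup_{K=1}^{\min(M+1,N)}\mathcal F_K^{\mathrm{in}}\times \mathcal Q_K^{\mathrm{an}}$. Then $\mathcal M'$ is identifiable: for all $(F^1,Q^1),(F^2,Q^2)\in\mathcal M'$, $F^1Q^1=F^2Q^2$ implies $(F^1,Q^1)\sim(F^2,Q^2)$.
   Context: Fix positive integers $M$ and $N$. For a positive integer $K$, $\mathcal F_K$ is the set of real $M\times K$ matrices with all entries in $[0,1]$, and $\mathcal Q_K$ is the set of real $K\times N$ matrices with entries in $[0,1]$ each of whose columns sums to $1$. $e_k$ denotes the $k$-th standard basis vector, and $A_{\star j}$ denotes the $j$-th column of a matrix $A$. $\mathcal Q_K^{\mathrm{an}}$ is the set of $Q\in\mathcal Q_K$ such that for every $k\in\{1,\dots,K\}$ there is $i\in\{1,\dots,N\}$ with $Q_{\star i}=e_k$. $\mathcal F_K^{\mathrm{in}}$ is the set of $F\in\mathcal F_K$ such that the vectors $F_{\star 1}-F_{\star K},\dots,F_{\star K-1}-F_{\star K}$ are linearly independent (a vacuous condition when $K=1$). Two pairs are equivalent, $(F^1,Q^1)\sim(F^2,Q^2)$, if $F^1,F^2$ have the same number $K$ of columns and there is a permutation $\pi$ of $\{1,\dots,K\}$ with $F^2_{sk}=F^1_{s\pi(k)}$ and $Q^2_{ki}=Q^1_{\pi(k)i}$ for all $s,k,i$. A set $\mathcal M\subseteq\bigcup_{K\ge1}\mathcal F_K\times\mathcal Q_K$ is called identifiable if for all $(F^1,Q^1),(F^2,Q^2)\in\mathcal M$, $F^1Q^1=F^2Q^2$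 implies $(F^1,Q^1)\sim(F^2,Q^2)$. *)

(* Defs.v *)
From mathcomp Require Import all_boot all_order all_fingroup all_algebra.
From mathcomp Require Import reals.
Set Implicit Arguments. Unset Strict Implicit. Unset Printing Implicit Defensive.
Import Order.TTheory GRing.Theory Num.Theory.
Local Open Scope ring_scope.

Section Defs.
Variable R : realType.

Definition inF (M K : nat) (F : 'M[R]_(M, K)) : Prop :=
  forall s k, 0 <= F s k <= 1.

Definition inQ (K N : nat) (Q : 'M[R]_(K, N)) : Prop :=
  (forall k i, 0 <= Q k i <= 1) /\ (forall i, \sum_(k < K) Q k i = 1).

Definition e_vec (K : nat) (k : 'I_K) : 'cV[R]_K := delta_mx k 0.

Definition inQan (K N : nat) (Q : 'M[R]_(K, N)) : Prop :=
  inQ Q /\ forall k : 'I_K, exists i : 'I_N, col i Q = e_vec k.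

(* F in \mathcal F_K^in : the K-1 vectors F_{*k} - F_{*K} (k = 1..K-1, i.e.
   0-based indices k < K-1, with K-1 the last column) are linearly independent *)
Definition inFin (M K : nat) (F : 'M[R]_(M, K)) : Prop :=
  inF F /\
  forall (last : 'I_K), (last : nat) = K.-1 ->
  forall c : 'I_K -> R,
    \sum_(k < K | ((k : nat) < K.-1)%N) c k *: (col k F - col last F) = 0 ->
    forall k : 'I_K, ((k : nat) < K.-1)%N -> c k = 0.

Definition pair_equiv (M N K1 K2 : nat)
  (F1 : 'M[R]_(M, K1)) (Q1 : 'M[R]_(K1, N))
  (F2 : 'M[R]_(M, K2)) (Q2 : 'M[R]_(K2, N)) : Prop :=
  exists eK : K1 = K2, exists pi : {perm 'I_K1},
    (forall s (k : 'I_K1), F2 s (cast_ord eK k) = F1 s (pi k)) /\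
    (forall (k : 'I_K1) i, Q2 (cast_ord eK k) i = Q1 (pi k) i).

Definition inMprime (M N K : nat) (F : 'M[R]_(M, K)) (Q : 'M[R]_(K, N)) : Prop :=
  (1 <= K)%N /\ (K <= minn M.+1 N)%N /\ inFin F /\ inQan Q.

End Defs.

(* Main.v *)
Require Import Defs.
From mathcomp Require Import all_boot all_order all_fingroup all_algebra.
From mathcomp Require Import reals.
From mathcomp Require Import lra zify.
Set Implicit Arguments. Unset Strict Implicit.
Import Order.TTheory GRing.Theory Num.Theory.
Local Open Scope ring_scope.

Section Aux.
Variable R : realType.

Lemma colM (m n p : nat) (A : 'M[R]_(m, n)) (B : 'M[R]_(n, p)) i :
  col i (A *m B) = A *m col i B.
Proof. by rewrite !colE mulmxA. Qed.

Lemma affine_uniq (M K : nat) (F : 'M[R]_(M, K)) (u v : 'cV[R]_K) :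
  inFin F -> F *m u = F *m v -> \sum_k u k 0 = \sum_k v k 0 -> u = v.
Proof.
case: K F u v => [|n] F u v [_ HF] Huv Hs.
  by apply/matrixP => -[] //.
pose c k := u k 0 - v k 0.
have Hsc : \sum_k c k = 0 by rewrite /c sumrB Hs subrr.
have Hlin : \sum_(k < n.+1 | (k < n.+1.-1)%N) c k *: (col k F - col ord_max F) = 0.
  have Hfull : \sum_(k < n.+1) c k *: (col k F - col ord_max F) = 0.
    apply/matrixP => s j; rewrite summxE !mxE.
    have -> : \sum_k (c k *: (col k F - col ord_max F)) s j
       = \sum_k (c k * F s k) - (\sum_k c k) * F s ord_max.
      rewrite mulr_suml -sumrB; apply: eq_bigr => k _.
      by rewrite !mxE mulrBr.
    rewrite Hsc mul0r subr0.
    have := congr1 (fun m : 'M[R]_(M,1) => m s 0) Huv; rewrite !mxE => E.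
    have -> : \sum_k c k * F s k = \sum_k F s k * u k 0 - \sum_k F s k * v k 0.
      by rewrite -sumrB; apply: eq_bigr => k _; rewrite /c mulrBl mulrC [v _ _ * _]mulrC.
    by rewrite E subrr.
  move: Hfull; rewrite (bigID (fun k : 'I_n.+1 => (k < n.+1.-1)%N) predT) /=.
  rewrite [X in _ + X]big1 ?addr0 // => k Hk.
  have -> : k = ord_max.
    by apply/val_inj => /=; move: Hk (ltn_ord k); rewrite /= -leqNgt; lia.
  by rewrite subrr scaler0.
have H0 := HF ord_max erefl c Hlin.
have Hc : forall k, c k = 0.
  move=> k; case: (ltnP k n) => Hk; first exact: H0.
  have Ek : k = ord_max by apply/val_inj => /=; move: (ltn_ord k); lia.
  move: Hsc; rewrite (bigD1 ord_max) //= big1 ?addr0; first by rewrite Ek.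
  move=> j Hj; apply: H0 => /=.
  have : (j : nat) != n by apply: contra Hj => /eqP Hj; apply/eqP/val_inj.
  move: (ltn_ord j); lia.
apply/matrixP => k j; rewrite (ord1 j).
by apply/eqP; rewrite -subr_eq0; apply/eqP; exact: Hc.
Qed.


Lemma col_match (M N K1 K2 : nat) (F1 : 'M[R]_(M, K1)) (Q1 : 'M[R]_(K1, N))
  (F2 : 'M[R]_(M, K2)) (Q2 : 'M[R]_(K2, N)) :
  inFin F1 -> inQan Q1 -> inQan Q2 -> F1 *m Q1 = F2 *m Q2 ->
  forall k : 'I_K1, exists j : 'I_K2, col j F2 = col k F1.
Proof.
move=> HF1 [[Q1b Q1s] Q1an] [[Q2b Q2s] Q2an] E k.
have [i Hi] := Q1an k.
pose a := col i Q2.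
have Hk : col k F1 = F2 *m a.
  by rewrite /a -colM -E colM Hi /e_vec -colE.
have [ij Hij] := fin_all_exists Q2an.
pose B := \matrix_(l, j) Q1 l (ij j).
have HFB : F2 = F1 *m B.
  apply/matrixP => s j.
  have : col j F2 = F1 *m col (ij j) Q1.
    by rewrite -colM E colM Hij /e_vec -colE.
  move/(congr1 (fun m : 'M[R]_(M,1) => m s 0)); rewrite !mxE => ->.
  by apply: eq_bigr => l _; rewrite !mxE.
have Hsa : \sum_j a j 0 = 1 by rewrite -(Q2s i); apply: eq_bigr => j _; rewrite mxE.
have HeB : e_vec R k = B *m a.
  have := (@affine_uniq M K1 F1 (e_vec R k) (B *m a) HF1); apply.
    by rewrite /e_vec -colE Hk HFB mulmxA.
  rewrite /e_vec (bigD1 k) //= big1 => [|l Hl]; last by rewrite mxE (negPf Hl).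
  rewrite mxE !eqxx addr0.
  under eq_bigr => l _ do rewrite mxE.
  rewrite exchange_big /= -Hsa; apply: eq_bigr => j _.
  rewrite -mulr_suml.
  have -> : \sum_l B l j = 1 by rewrite -(Q1s (ij j)); apply: eq_bigr => l _; rewrite mxE.
  by rewrite mul1r.
have H1 : \sum_j B k j * a j 0 = 1.
  by move: (congr1 (fun m : 'cV[R]_K1 => m k 0) HeB); rewrite !mxE !eqxx /= => <-.
have Hz : \sum_j a j 0 * (1 - B k j) = 0.
  under eq_bigr => j _ do rewrite mulrBr mulr1.
  by rewrite sumrB Hsa; under eq_bigr => j _ do rewrite mulrC; rewrite H1 subrr.
have Hnn : forall j, 0 <= a j 0 * (1 - B k j).
  move=> j; apply: mulr_ge0; rewrite /a mxE; first by case/andP: (Q2b j i).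
  by rewrite subr_ge0; case/andP: (Q1b k (ij j)).
have [j Hj] : exists j, a j 0 != 0.
  apply/existsP; apply: contraT; rewrite negb_exists => /forallP Hall.
  move: Hsa; rewrite big1 => [|j _]; last by apply/eqP; move: (Hall j); rewrite negbK.
  by move/eqP; rewrite eq_sym oner_eq0.
have HBk : B k j = 1.
  have := @psumr_eq0P _ _ predT (fun j => a j 0 * (1 - B k j)) (fun j _ => Hnn j) Hz j isT.
  move/eqP; rewrite mulf_eq0 (negPf Hj) /= subr_eq0 => /eqP <-.
  by [].
exists j.
have Hcol : col (ij j) Q1 = e_vec R k.
  apply/matrixP => l z; rewrite (ord1 z) !mxE.
  have Bkj : Q1 k (ij j) = 1 by move: HBk; rewrite mxE.
  case: eqP => [->|/eqP Hl] //=.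
  have := Q1s (ij j); rewrite (bigD1 k) //= Bkj -{2}(addr0 1) => /addrI Hs0.
  apply: (psumr_eq0P _ Hs0); last exact: Hl.
  by move=> l' _; case/andP: (Q1b l' (ij j)).
by rewrite colE -[delta_mx j 0]/(e_vec R j) -Hij -colM -E colM Hcol /e_vec -colE.
Qed.


Lemma col_inj (M K : nat) (F : 'M[R]_(M, K)) (k k' : 'I_K) :
  inFin F -> col k F = col k' F -> k = k'.
Proof.
move=> HF Hc.
have H : delta_mx k 0 = delta_mx k' 0 :> 'cV[R]_K.
  apply: (@affine_uniq M K F _ _ HF); first by rewrite -!colE.
  rewrite (bigD1 k) //= big1 => [|l Hl]; last by rewrite mxE (negPf Hl).
  rewrite (bigD1 k') //= [X in _ = _ + X]big1 => [|l Hl]; last by rewrite mxE (negPf Hl).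
  by rewrite !mxE !eqxx.
move: (congr1 (fun m : 'cV[R]_K => m k 0) H); rewrite !mxE !eqxx /=.
by case: eqP => // _ /= /eqP; rewrite oner_eq0.
Qed.

End Aux.

Unset Implicit Arguments.
Theorem mainTheorem1 (R : realType) (M N : nat) (HM : (0 < M)%N) (HN : (0 < N)%N)
  (K1 K2 : nat)
  (F1 : 'M[R]_(M, K1)) (Q1 : 'M[R]_(K1, N))
  (F2 : 'M[R]_(M, K2)) (Q2 : 'M[R]_(K2, N)) :
  inMprime F1 Q1 -> inMprime F2 Q2 ->
  F1 *m Q1 = F2 *m Q2 ->
  pair_equiv F1 Q1 F2 Q2.
Proof.
move=> [_ [_ [HF1 HQ1]]] [_ [_ [HF2 HQ2]]] E.
have [f Hf] := fin_all_exists (col_match HF1 HQ1 HQ2 E).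
have [g Hg] := fin_all_exists (col_match HF2 HQ2 HQ1 (esym E)).
have finj : injective f.
  by move=> k k' Hkk; apply: (col_inj HF1); rewrite -Hf -Hf Hkk.
have ginj : injective g.
  by move=> k k' Hkk; apply: (col_inj HF2); rewrite -Hg -Hg Hkk.
have eK : K1 = K2.
  have := leq_card _ finj; have := leq_card _ ginj; rewrite !card_ord.
  by move=> h1 h2; apply/eqP; rewrite eqn_leq h1 h2.
subst K2.
exists erefl.
pose pi := perm ginj.
have HF : forall s k, F2 s k = F1 s (pi k).
  move=> s k; rewrite permE.
  by move: (congr1 (fun m : 'cV[R]_M => m s 0) (Hg k)); rewrite !mxE.
exists pi; split.
  by move=> s k; rewrite cast_ord_id.
move: HQ1 HQ2 => [[_ Q1s] _] [[_ Q2s] _].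
pose Qp := \matrix_(l, i) Q2 (pi^-1 l)%g i.
have EQ : Q1 = Qp.
  apply/matrixP => l i.
  suff Hc : col i Q1 = col i Qp by move: (congr1 (fun m : 'cV[R]_K1 => m l 0) Hc); rewrite !mxE.
  apply: (@affine_uniq R M K1 F1 _ _ HF1).
    rewrite -!colM E; congr col.
    apply/matrixP => s i'; rewrite !mxE.
    rewrite [RHS](reindex_inj (@perm_inj _ pi)) /=.
    by apply: eq_bigr => j _; rewrite mxE permK HF.
  under eq_bigr => l' _ do rewrite mxE.
  under [RHS]eq_bigr => l' _ do rewrite !mxE.
  rewrite Q1s (reindex_inj (@perm_inj _ pi)) /=.
  by under eq_bigr => j _ do rewrite permK; rewrite Q2s.
by move=> k i; rewrite cast_ord_id EQ mxE permK.
Qed.
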